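(* For all $k,\ell\in\mathbb N$ the following hold in the $q$-shuffle algebra $\mathbb V$: $$[W_{-k},G_\ell]_q=[W_{-\ell},G_k]_q,\qquad [G_k,W_{\ell+1}]_q=[G_\ell,W_{k+1}]_q,$$ $$[\tilde G_k,W_{-\ell}]_q=[\tilde G_\ell,W_{-k}]_q,\qquad [W_{\ell+1},\tilde G_k]_q=[W_{k+1},\tilde G_\ell]_q,$$ $$[G_k,\tilde G_{\ell+1}]-[G_\ell,\tilde G_{k+1}]=q[W_{-\ell},W_{k+1}]_q-q[W_{-k},W_{\ell+1}]_q,$$ $$[\tilde G_k,G_{\ell+1}]-[\tilde G_\ell,G_{k+1}]=q[W_{\ell+1},W_{-k}]_q-q[W_{k+1},W_{-\ell}]_q,$$ $$[G_{k+1},\tilde G_{\ell+1}]_q-[G_{\ell+1},\tilde G_{k+1}]_q=q[W_{-\ell},W_{k+2}]-q[W_{-k},W_{\ell+2}],$$ $$[\tilde G_{k+1},G_{\ell+1}]_q-[\tilde G_{\ell+1},G_{k+1}]_q=q[W_{\ell+1},W_{-k-1}]-q[W_{k+1},W_{-\ell-1}].$$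
   Context: Let $\mathbb F$ be a field and let $q\in\mathbb F$ be nonzero and not a root of unity. Let $\mathbb V$ be the free associative $\mathbb F$-algebra on noncommuting $x,y$, with basis the words (including $1$). Juxtaposition denotes concatenation. Set $\langle x,x\rangle=\langle y,y\rangle=2$ and $\langle x,y\rangle=\langle y,x\rangle=-2$. The $q$-shuffle product $\star$ is the bilinear product determined as follows: - $1\star v=v\star 1=v$; - for nontrivial words $u=u_1\cdots u_r$ and $v=v_1\cdots v_s$, $$u\star v=u_1((u_2\cdots u_r)\star v)+v_1(u\star(v_2\cdots v_s))q^{\langle u_1,v_1\rangle+\cdots+\langle u_r,v_1\rangle}.$$ This makes $\mathbb V$ an associative algebra, the $q$-shuffle algebra. Write $[a,b]=a\star b-b\star a$ and $[a,b]_q=q\,a\star b-q^{-1}b\star a$. For $k\in\mathbb N$: - $W_{-k}=xyx\cdots x$ is the alternating word of length $2k+1$ beginning and ending with $x$; - $W_{k+1}=yxy\cdots y$ is the alternating word of length $2k+1$ beginning and ending with $y$; - $G_k=yxyx\cdots yx$ is the word of length $2k$; - $\tilde G_k=xyxy\cdots xy$ is the word of length $2k$; - $G_0=\tilde G_0=1$. *)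

(* Defs.v *)
From mathcomp Require Import all_boot all_order all_algebra.
Set Implicit Arguments. Unset Strict Implicit. Unset Printing Implicit Defensive.
Import Order.TTheory GRing.Theory Num.Theory.
Local Open Scope ring_scope.

(* Letters: [false] is x, [true] is y.  Words are sequences of letters. *)
Notation letter := bool.
Notation lx := false.
Notation ly := true.
Definition word := seq letter.

Definition pairing (a b : letter) : int := if a == b then 2%Z else (-2)%Z.

Section QShuffle.
Variable F : fieldType.
Variable q : F.

(* An element of the free algebra V is represented by a formal finite linear
   combination of words (a list of (coefficient, word) pairs); two such
   representations denote the same element of V iff they have the same
   coefficient on every word (see [veq]). *)
Definition V := seq (F * word).

Definition vcoef (v : V) (w : word) : F := \sum_(p <- v | p.2 == w) p.1.
Definition veq (a b : V) : Prop := forall w : word, vcoef a w = vcoef b w.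

Definition vword (w : word) : V := [:: (1, w)].
Definition vadd (a b : V) : V := a ++ b.
Definition vscale (c : F) (a : V) : V := [seq (c * p.1, p.2) | p <- a].
Definition vsub (a b : V) : V := vadd a (vscale (-1) b).
Definition vcons (l : letter) (a : V) : V := [seq (p.1, l :: p.2) | p <- a].

Fixpoint wshuffle (u : word) : word -> V :=
  match u with
  | [::] => fun v => vword v
  | u1 :: u' =>
      fix wsh_u (v : word) : V :=
        match v with
        | [::] => vword u
        | v1 :: v' =>
            vadd (vcons u1 (wshuffle u' v))
                 (vscale (q ^ (\sum_(a <- u) pairing a v1)) (vcons v1 (wsh_u v')))
        end
  end.

Definition vstar (a b : V) : V :=
  flatten [seq [seq (p.1 * r.1 * s.1, s.2) | s <- wshuffle p.2 r.2] | p <- a, r <- b].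

Definition comm (a b : V) : V := vsub (vstar a b) (vstar b a).
Definition qcomm (a b : V) : V := vsub (vscale q (vstar a b)) (vscale q^-1 (vstar b a)).

End QShuffle.

Definition altw (a : letter) (n : nat) : word := mkseq (fun i => if odd i then ~~ a else a) n.

Definition Wm (F : fieldType) (k : nat) : V F := vword F (altw lx (2 * k).+1).
Definition Wp (F : fieldType) (k : nat) : V F := vword F (altw ly (2 * k).+1).
Definition W (F : fieldType) (n : int) : V F :=
  match n with
  | Posz 0 => Wm F 0
  | Posz (S k) => Wp F k
  | Negz k => Wm F k.+1
  end.
Definition G (F : fieldType) (k : nat) : V F := vword F (altw ly (2 * k)).
Definition Gt (F : fieldType) (k : nat) : V F := vword F (altw lx (2 * k)).

(* Main.v *)
Require Import Defs.
From mathcomp Require Import all_boot all_order all_algebra.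
From mathcomp Require Import ring.
Import GRing.Theory.
Local Open Scope ring_scope.

Lemma altwS a n : altw a n.+1 = a :: altw (~~ a) n.
Proof.
rewrite /altw /mkseq /=; congr (_ :: _).
rewrite -[1%N]/(1 + 0)%N iotaDl -map_comp; apply: eq_map => i /=.
by case: (odd i); case: a.
Qed.

Definition aw k := altw lx (2 * k).+1.
Definition bw k := altw ly (2 * k).+1.
Definition gw k := altw ly (2 * k).
Definition hw k := altw lx (2 * k).

Lemma aw_cons k : aw k = lx :: gw k. Proof. by rewrite /aw altwS. Qed.
Lemma bw_cons k : bw k = ly :: hw k. Proof. by rewrite /bw altwS. Qed.
Lemma gw0 : gw 0 = [::]. Proof. by []. Qed.
Lemma hw0 : hw 0 = [::]. Proof. by []. Qed.
Lemma gwS k : gw k.+1 = ly :: aw k. Proof. by rewrite /gw mulnS altwS. Qed.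
Lemma hwS k : hw k.+1 = lx :: bw k. Proof. by rewrite /hw mulnS altwS. Qed.

Lemma map_altw a n : map negb (altw a n) = altw (~~ a) n.
Proof.
elim: n a => [|n IH] a //; by rewrite !altwS /= IH.
Qed.

Section S.
Variable F : fieldType.
Variable q : F.

Lemma vcoef_cat (a b : V F) w : vcoef (a ++ b) w = vcoef a w + vcoef b w.
Proof. by rewrite /vcoef big_cat. Qed.

Lemma vcoef_scale c (a : V F) w : vcoef (vscale c a) w = c * vcoef a w.
Proof. by rewrite /vcoef /vscale big_map mulr_sumr. Qed.

Lemma vcoef_cons l (a : V F) l' w :
  vcoef (vcons l a) (l' :: w) = (l == l')%:R * vcoef a w.
Proof.
rewrite /vcoef /vcons big_map /=.
case: (eqVneq l l') => [->|ne].
  by rewrite mul1r; apply: eq_bigl => p /=; rewrite eqseq_cons eqxx.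
rewrite mul0r big1 // => p /=; by rewrite eqseq_cons (negbTE ne).
Qed.

Lemma vcoef_cons_nil l (a : V F) : vcoef (vcons l a) [::] = 0.
Proof. by rewrite /vcoef /vcons big_map big1. Qed.

Lemma vcoef_word u w : vcoef (vword F u) w = (u == w)%:R.
Proof. by rewrite /vcoef /vword big_cons big_nil addr0; case: (u == w). Qed.

Definition s u v w := vcoef (wshuffle q u v) w.
Definition ps (u : word) a : int := \sum_(c <- u) pairing c a.
Definition e u a := q ^ ps u a.

Lemma wsh_nil_r u : wshuffle q u [::] = vword F u.
Proof. by case: u. Qed.

Lemma wsh_cons b u c v : wshuffle q (b :: u) (c :: v) =
  vadd (vcons b (wshuffle q u (c :: v))) (vscale (e (b :: u) c) (vcons c (wshuffle q (b :: u) v))).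
Proof. by []. Qed.

Definition Dl u a v w := if u is b :: u' then (b == a)%:R * s u' v w else 0.
Definition Dr u v a w := if v is c :: v' then (c == a)%:R * e u a * s u v' w else 0.

Lemma s_nil u v : s u v [::] = (u == [::])%:R * (v == [::])%:R.
Proof.
case: u => [|b u]; case: v => [|c v]; rewrite /s ?wsh_nil_r /= ?vcoef_word ?mul1r ?mul0r ?mulr0 //.
by rewrite /vadd vcoef_cat vcoef_scale !vcoef_cons_nil mulr0 addr0.
Qed.

Lemma e_nil a : e [::] a = 1.
Proof. by rewrite /e /ps big_nil expr0z. Qed.

Lemma s_nil_l v w : s [::] v w = (v == w)%:R.
Proof. by rewrite /s /= vcoef_word. Qed.

Lemma s_nil_r u w : s u [::] w = (u == w)%:R.
Proof. by rewrite /s wsh_nil_r vcoef_word. Qed.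

Lemma s_cons u v a w : s u v (a :: w) = Dl u a v w + Dr u v a w.
Proof.
case: u => [|b u]; case: v => [|c v].
- by rewrite s_nil_l /= add0r.
- rewrite s_nil_l /= add0r e_nil mulr1 s_nil_l eqseq_cons.
  by case: (c == a); case: (v == w); rewrite /= ?mul1r ?mul0r.
- rewrite s_nil_r /= addr0 s_nil_r eqseq_cons.
  by case: (b == a); case: (u == w); rewrite /= ?mul1r ?mul0r.
- rewrite /s wsh_cons /vadd vcoef_cat vcoef_scale !vcoef_cons /=.
  case: (eqVneq c a) => [->|ne]; last by rewrite !mul0r mulr0.
  by rewrite mulrCA mulrA.
Qed.


Definition ind k : F := (0 < k)%:R.

Lemma ps_cons c u a : ps (c :: u) a = pairing c a + ps u a.
Proof. by rewrite /ps big_cons. Qed.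
Lemma ps_gw k a : ps (gw k) a = 0.
Proof.
elim: k => [|k IH]; first by rewrite /ps big_nil.
by rewrite gwS aw_cons !ps_cons IH addr0; case: (a).
Qed.
Lemma ps_hw k a : ps (hw k) a = 0.
Proof.
elim: k => [|k IH]; first by rewrite /ps big_nil.
by rewrite hwS bw_cons !ps_cons IH addr0; case: (a).
Qed.
Lemma e_gw k a : e (gw k) a = 1. Proof. by rewrite /e ps_gw expr0z. Qed.
Lemma e_hw k a : e (hw k) a = 1. Proof. by rewrite /e ps_hw expr0z. Qed.
Lemma e_aw_x k : e (aw k) lx = q ^+ 2.
Proof. by rewrite /e aw_cons ps_cons ps_gw addr0. Qed.
Lemma e_aw_y k : e (aw k) ly = (q ^+ 2)^-1.
Proof. by rewrite /e aw_cons ps_cons ps_gw addr0. Qed.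
Lemma e_bw_x k : e (bw k) lx = (q ^+ 2)^-1.
Proof. by rewrite /e bw_cons ps_cons ps_hw addr0. Qed.
Lemma e_bw_y k : e (bw k) ly = q ^+ 2.
Proof. by rewrite /e bw_cons ps_cons ps_hw addr0. Qed.

Lemma Dl_aw_x k v w : Dl (aw k) lx v w = s (gw k) v w.
Proof. by rewrite aw_cons /= mul1r. Qed.
Lemma Dl_aw_y k v w : Dl (aw k) ly v w = 0.
Proof. by rewrite aw_cons /= mul0r. Qed.
Lemma Dl_bw_x k v w : Dl (bw k) lx v w = 0.
Proof. by rewrite bw_cons /= mul0r. Qed.
Lemma Dl_bw_y k v w : Dl (bw k) ly v w = s (hw k) v w.
Proof. by rewrite bw_cons /= mul1r. Qed.
Lemma Dl_gw_x k v w : Dl (gw k) lx v w = 0.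
Proof. by case: k => [|k]; rewrite ?gwS /= ?mul0r. Qed.
Lemma Dl_gw_y k v w : Dl (gw k) ly v w = ind k * s (aw k.-1) v w.
Proof. by case: k => [|k]; rewrite /ind ?gwS /= ?mul0r. Qed.
Lemma Dl_hw_x k v w : Dl (hw k) lx v w = ind k * s (bw k.-1) v w.
Proof. by case: k => [|k]; rewrite /ind ?hwS /= ?mul0r. Qed.
Lemma Dl_hw_y k v w : Dl (hw k) ly v w = 0.
Proof. by case: k => [|k]; rewrite ?hwS /= ?mul0r. Qed.

Lemma Dr_aw_x u k w : Dr u (aw k) lx w = e u lx * s u (gw k) w.
Proof. by rewrite aw_cons /= mul1r. Qed.
Lemma Dr_aw_y u k w : Dr u (aw k) ly w = 0.
Proof. by rewrite aw_cons /= !mul0r. Qed.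
Lemma Dr_bw_x u k w : Dr u (bw k) lx w = 0.
Proof. by rewrite bw_cons /= !mul0r. Qed.
Lemma Dr_bw_y u k w : Dr u (bw k) ly w = e u ly * s u (hw k) w.
Proof. by rewrite bw_cons /= mul1r. Qed.
Lemma Dr_gw_x u k w : Dr u (gw k) lx w = 0.
Proof. by case: k => [|k]; rewrite ?gwS /= ?mul0r. Qed.
Lemma Dr_gw_y u k w : Dr u (gw k) ly w = ind k * e u ly * s u (aw k.-1) w.
Proof. by case: k => [|k]; rewrite /ind ?gwS /= ?mul0r ?mul1r. Qed.
Lemma Dr_hw_x u k w : Dr u (hw k) lx w = ind k * e u lx * s u (bw k.-1) w.
Proof. by case: k => [|k]; rewrite /ind ?hwS /= ?mul0r ?mul1r. Qed.
Lemma Dr_hw_y u k w : Dr u (hw k) ly w = 0.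
Proof. by case: k => [|k]; rewrite ?hwS /= ?mul0r. Qed.

Lemma ps_neg u a : ps (map negb u) (~~ a) = ps u a.
Proof. by rewrite /ps big_map; apply: eq_bigr => c _; case: c; case: a. Qed.

Lemma s_neg u v w : s (map negb u) (map negb v) (map negb w) = s u v w.
Proof.
elim: w u v => [|a w IH] u v.
  by rewrite !s_nil; case: u; case: v.
rewrite /= !s_cons; congr (_ + _).
  by case: u => [|b u] //=; rewrite IH; case: (a); case: b.
case: v => [|c v] //=; rewrite IH /e ps_neg; by case: (a); case: c.
Qed.

Lemma s_nil_aw k v : s (aw k) v [::] = 0.
Proof. by rewrite s_nil aw_cons mul0r. Qed.
Lemma s_nil_aw' k v : s v (aw k) [::] = 0.
Proof. by rewrite s_nil aw_cons mulr0. Qed.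
Lemma s_nil_bw k v : s (bw k) v [::] = 0.
Proof. by rewrite s_nil bw_cons mul0r. Qed.
Lemma s_nil_bw' k v : s v (bw k) [::] = 0.
Proof. by rewrite s_nil bw_cons mulr0. Qed.

Hypothesis hq0 : q != 0.

Definition cm u v w := s u v w - s v u w.
Definition qc u v w := q * s u v w - q^-1 * s v u w.

Definition r0 k l w := cm (aw k) (aw l) w.
Definition r1 k l w := cm (gw k) (gw l) w.
Definition r2 k l w := ind k * cm (aw k.-1) (gw l) w - ind l * cm (aw l.-1) (gw k) w.
Definition r3 k l w := qc (aw k) (gw l) w - qc (aw l) (gw k) w.
Definition r4 k l w := qc (hw k) (aw l) w - qc (hw l) (aw k) w.
Definition r5 k l w := cm (gw k) (hw l.+1) w - cm (gw l) (hw k.+1) w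
   - q * qc (aw l) (bw k) w + q * qc (aw k) (bw l) w.
Definition r6 k l w := qc (gw k) (hw l) w - qc (gw l) (hw k) w
   - q * ind l * cm (aw l.-1) (bw k) w + q * ind k * cm (aw k.-1) (bw l) w.
Definition r7 k l w := ind k * cm (aw k.-1) (hw l) w - ind l * cm (aw l.-1) (hw k) w.
Definition t2 k l w := qc (gw k) (bw l) w - qc (gw l) (bw k) w.
Definition t8 k l w := qc (hw k) (gw l) w - qc (hw l) (gw k) w
   - q * ind l * cm (bw l.-1) (aw k) w + q * ind k * cm (bw k.-1) (aw l) w.

Definition rel i k l w := match i with
 | 0 => r0 k l w | 1 => r1 k l w | 2 => r2 k l w | 3 => r3 k l w
 | 4 => r4 k l w | 5 => r5 k l w | 6 => r6 k l w | 7 => r7 k l w | _ => 0 end.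

Lemma s_negw u v w : s u v (map negb w) = s (map negb u) (map negb v) w.
Proof. by rewrite -s_neg !mapK //; apply: negbK. Qed.

Lemma neg_aw k : map negb (aw k) = bw k. Proof. exact: map_altw. Qed.
Lemma neg_bw k : map negb (bw k) = aw k. Proof. exact: map_altw. Qed.
Lemma neg_gw k : map negb (gw k) = hw k. Proof. exact: map_altw. Qed.
Lemma neg_hw k : map negb (hw k) = gw k. Proof. exact: map_altw. Qed.

Lemma t2_sig k l w : t2 k l w = r4 k l (map negb w).
Proof. by rewrite /t2 /r4 /qc !s_negw !neg_aw !neg_hw. Qed.
Lemma t8_sig k l w : t8 k l w = r6 k l (map negb w).
Proof. by rewrite /t8 /r6 /qc /cm !s_negw !neg_aw !neg_hw !neg_bw !neg_gw. Qed.

Lemma indS k : ind k.+1 = 1. Proof. by []. Qed.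
Lemma ind0 : ind 0 = 0. Proof. by []. Qed.

Lemma lc1 (x y c : F) : y = 0 -> x = c * y -> x = 0.
Proof. by move=> -> ->; rewrite mulr0. Qed.
Lemma lc2 (x y1 y2 c1 c2 : F) : y1 = 0 -> y2 = 0 -> x = c1 * y1 + c2 * y2 -> x = 0.
Proof. by move=> -> -> ->; rewrite !mulr0 addr0. Qed.

Set Bullet Behavior "Strict Subproofs".
Ltac fld := field; rewrite ?expf_neq0 ?mulf_neq0 ?hq0 //.
Ltac ex := rewrite /cm /qc !s_cons ?Dl_aw_x ?Dl_aw_y ?Dl_bw_x ?Dl_bw_y ?Dl_gw_x ?Dl_gw_y ?Dl_hw_x ?Dl_hw_y
  ?Dr_aw_x ?Dr_aw_y ?Dr_bw_x ?Dr_bw_y ?Dr_gw_x ?Dr_gw_y ?Dr_hw_x ?Dr_hw_y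
  ?e_aw_x ?e_aw_y ?e_bw_x ?e_bw_y ?e_gw ?e_hw ?indS ?succnK.

Lemma step w a : (forall i k l, rel i k l w = 0) -> (forall i k l, rel i k l (map negb w) = 0) ->
  forall i k l, rel i k l (a :: w) = 0.
Proof.
move=> H Hs i k l.
have T2 k' l' : t2 k' l' w = 0 by rewrite t2_sig; exact: (Hs 4 k' l').
have T8 k' l' : t8 k' l' w = 0 by rewrite t8_sig; exact: (Hs 6 k' l').
have R0 k' l' : r0 k' l' w = 0 := H 0 k' l'.
have R1 k' l' : r1 k' l' w = 0 := H 1 k' l'.
have R2 k' l' : r2 k' l' w = 0 := H 2 k' l'.
have R3 k' l' : r3 k' l' w = 0 := H 3 k' l'.
have R4 k' l' : r4 k' l' w = 0 := H 4 k' l'.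
have R5 k' l' : r5 k' l' w = 0 := H 5 k' l'.
have R6 k' l' : r6 k' l' w = 0 := H 6 k' l'.
have R7 k' l' : r7 k' l' w = 0 := H 7 k' l'.
case: i => [|[|[|[|[|[|[|[|i]]]]]]]]; last by []; rewrite /= ?/r0 ?/r1 ?/r2 ?/r3 ?/r4 ?/r5 ?/r6 ?/r7; case: a; ex.
- ring.
- have hh := R3 k l; rewrite /r3 /qc in hh.
  apply: (@lc1 _ _ q hh); fld.
- have hh := R2 k l; rewrite /r2 /cm in hh.
  apply: (@lc1 _ _ 1 hh); ring.
- ring.
- have hh := R0 k.-1 l.-1; rewrite /r0 /cm in hh.
  apply: (@lc1 _ _ (ind k * ind l * (1 + q^-2)) hh); fld.
- have hh1 := R1 k.-1 l; have hh2 := R1 l.-1 k; rewrite /r1 /cm in hh1 hh2.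
  apply: (@lc2 _ _ _ (ind k) (- ind l) hh1 hh2); ring.
- have hh1 := R0 k l.-1; have hh2 := R0 l k.-1; rewrite /r0 /cm in hh1 hh2.
  apply: (@lc2 _ _ _ (q^-1 * ind l) (- q^-1 * ind k) hh1 hh2); fld.
- have hh := R1 k l; rewrite /r1 /cm in hh.
  apply: (@lc1 _ _ (q + q^-1) hh); fld.
- ring.
- have hh := T8 k l; rewrite /t8 /qc /cm in hh.
  apply: (@lc1 _ _ 1 hh); fld.
- have hh1 := R7 k l.+1; have hh2 := R7 l k.+1; rewrite /r7 /cm ?indS ?succnK in hh1 hh2.
  apply: (@lc2 _ _ _ 1 (-1) hh1 hh2); fld.
- have hh := T2 k l; rewrite /t2 /qc in hh.
  apply: (@lc1 _ _ (q + q^-1) hh); fld.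
- have hh := R7 k l; rewrite /r7 /cm in hh.
  apply: (@lc1 _ _ (q + q^-1) hh); fld.
- have hh1 := T2 k l.-1; have hh2 := T2 l k.-1; rewrite /t2 /qc in hh1 hh2.
  apply: (@lc2 _ _ _ (ind l) (- ind k) hh1 hh2); fld.
- ring.
- case: k => [|k]; case: l => [|l]; rewrite ?ind0 ?indS ?hw0 ?succnK ?s_nil_l ?s_nil_r.
  + ring.
  + ring.
  + ring.
  + have hh := R5 k l; rewrite /r5 /cm /qc in hh.
    apply: (@lc1 _ _ 1 hh); fld.
Qed.


Lemma gw_nil k : (gw k == [::]) = (k == 0%N). Proof. by case: k. Qed.
Lemma hw_nil k : (hw k == [::]) = (k == 0%N). Proof. by case: k. Qed.

Lemma rels_all n : forall w, size w = n -> forall i k l, rel i k l w = 0.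
Proof.
elim: n => [|n IH] w.
  move/size0nil=> -> i k l.
  case: i => [|[|[|[|[|[|[|[|i]]]]]]]] //=;
  rewrite ?/r0 ?/r1 ?/r2 ?/r3 ?/r4 ?/r5 ?/r6 ?/r7 /cm /qc !s_nil ?aw_cons ?bw_cons /= ?gw_nil ?hw_nil; ring.
case: w => [|a w] //= [Hs].
apply: step; apply: IH => //; by rewrite size_map.
Qed.

Lemma rel_w i k l w : rel i k l w = 0.
Proof. exact: (@rels_all (size w)). Qed.

Lemma lcE (x y z c : F) : z = 0 -> x - y = c * z -> x = y.
Proof. by move=> -> /eqP; rewrite mulr0 subr_eq0 => /eqP. Qed.

Lemma vcoef_star u v w : vcoef (vstar q (vword F u) (vword F v)) w = s u v w.
Proof.
rewrite /vcoef /vstar /= cats0 big_map; apply: eq_bigr => p _; by rewrite !mul1r.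
Qed.

Lemma vcoef_sub (a b : V F) w : vcoef (vsub a b) w = vcoef a w - vcoef b w.
Proof. by rewrite /vsub /vadd vcoef_cat vcoef_scale mulN1r. Qed.

Lemma vcoef_qcomm u v w : vcoef (qcomm q (vword F u) (vword F v)) w = qc u v w.
Proof. by rewrite /qcomm vcoef_sub !vcoef_scale !vcoef_star. Qed.
Lemma vcoef_comm u v w : vcoef (comm q (vword F u) (vword F v)) w = cm u v w.
Proof. by rewrite /comm vcoef_sub !vcoef_star. Qed.

End S.

Lemma W_neg (F : fieldType) (k : nat) : W F (- (k : int)) = vword F (aw k).
Proof. by case: k. Qed.
Lemma W_pos1 (F : fieldType) (k : nat) : W F ((k : int) + 1) = vword F (bw k).
Proof. by rewrite -PoszD addn1. Qed.
Lemma W_pos2 (F : fieldType) (k : nat) : W F ((k : int) + 2) = vword F (bw k.+1).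
Proof. by rewrite -PoszD addn2. Qed.
Lemma W_negS (F : fieldType) (k : nat) : W F (- (k : int) - 1) = vword F (aw k.+1).
Proof. by rewrite -opprD -PoszD addn1. Qed.

Theorem proposition5p11 (F : fieldType) (q : F) (hq0 : q != 0)
    (hq : forall n : nat, (0 < n)%N -> q ^+ n != 1) (k l : nat) :
  let kz := (k : int) in let lz := (l : int) in
  veq (qcomm q (W F (- kz)) (G F l)) (qcomm q (W F (- lz)) (G F k)) /\
      veq (qcomm q (G F k) (W F (lz + 1))) (qcomm q (G F l) (W F (kz + 1))) /\
      veq (qcomm q (Gt F k) (W F (- lz))) (qcomm q (Gt F l) (W F (- kz))) /\
      veq (qcomm q (W F (lz + 1)) (Gt F k)) (qcomm q (W F (kz + 1)) (Gt F l)) /\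
      veq (vsub (comm q (G F k) (Gt F l.+1)) (comm q (G F l) (Gt F k.+1)))
          (vsub (vscale q (qcomm q (W F (- lz)) (W F (kz + 1))))
                (vscale q (qcomm q (W F (- kz)) (W F (lz + 1))))) /\
      veq (vsub (comm q (Gt F k) (G F l.+1)) (comm q (Gt F l) (G F k.+1)))
          (vsub (vscale q (qcomm q (W F (lz + 1)) (W F (- kz))))
                (vscale q (qcomm q (W F (kz + 1)) (W F (- lz))))) /\
      veq (vsub (qcomm q (G F k.+1) (Gt F l.+1)) (qcomm q (G F l.+1) (Gt F k.+1)))
          (vsub (vscale q (comm q (W F (- lz)) (W F (kz + 2))))
                (vscale q (comm q (W F (- kz)) (W F (lz + 2))))) /\
      veq (vsub (qcomm q (Gt F k.+1) (G F l.+1)) (qcomm q (Gt F l.+1) (G F k.+1)))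
          (vsub (vscale q (comm q (W F (lz + 1)) (W F (- kz - 1))))
                (vscale q (comm q (W F (kz + 1)) (W F (- lz - 1))))).
Proof.
move=> kz lz; rewrite /kz /lz.
rewrite !W_neg !W_pos1 !W_pos2 !W_negS.
have GE k' : G F k' = vword F (gw k') by [].
have GtE k' : Gt F k' = vword F (hw k') by [].
rewrite !GE !GtE.
have Rw i k' l' w : @rel F q i k' l' w = 0 := @rel_w F q hq0 i k' l' w.
have Rs i k' l' w : @rel F q i k' l' (map negb w) = 0 := @rel_w F q hq0 i k' l' (map negb w).
split; [|split; [|split; [|split; [|split; [|split; [|split]]]]]] => w;
  rewrite ?vcoef_qcomm ?vcoef_comm ?vcoef_sub ?vcoef_scale ?vcoef_qcomm ?vcoef_comm ?vcoef_star /qc /cm.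
- have hh : r3 F q k l w = 0 := Rw 3 k l w.
  rewrite /r3 /qc in hh; apply: (@lcE F _ _ _ 1 hh); ring.
- have hh : r4 F q k l (map negb w) = 0 := Rs 4 k l w.
  rewrite /r4 /qc !s_negw ?neg_aw ?neg_hw ?neg_bw ?neg_gw in hh; apply: (@lcE F _ _ _ 1 hh); ring.
- have hh : r4 F q k l w = 0 := Rw 4 k l w.
  rewrite /r4 /qc in hh; apply: (@lcE F _ _ _ 1 hh); ring.
- have hh : r3 F q l k (map negb w) = 0 := Rs 3 l k w.
  rewrite /r3 /qc !s_negw ?neg_aw ?neg_hw ?neg_bw ?neg_gw in hh; apply: (@lcE F _ _ _ 1 hh); ring.
- have hh : r5 F q k l w = 0 := Rw 5 k l w.
  rewrite /r5 /qc /cm in hh; apply: (@lcE F _ _ _ 1 hh); ring.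
- have hh : r5 F q k l (map negb w) = 0 := Rs 5 k l w.
  rewrite /r5 /qc /cm !s_negw ?neg_aw ?neg_hw ?neg_bw ?neg_gw in hh; apply: (@lcE F _ _ _ 1 hh); ring.
- have hh : r6 F q k.+1 l.+1 w = 0 := Rw 6 k.+1 l.+1 w.
  rewrite /r6 /qc /cm !indS !succnK in hh; apply: (@lcE F _ _ _ 1 hh); ring.
- have hh : r6 F q k.+1 l.+1 (map negb w) = 0 := Rs 6 k.+1 l.+1 w.
  rewrite /r6 /qc /cm !indS !succnK !s_negw ?neg_aw ?neg_hw ?neg_bw ?neg_gw in hh; apply: (@lcE F _ _ _ 1 hh); ring.
Qed.
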